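(* Let $H$ be a group with a metric $d$ and $r\ge3$ an integer. For every sequence $\beta_0=0<\beta_1<3\beta_1<\beta_2<3\beta_2<\cdots<\beta_{r-1}<3\beta_{r-1}<\beta_r$ we have $$H^r=\Delta(\beta_r)\cup\Big(\bigcup_{j=0}^{r-1}\ \bigcup_{\mathcal{Q}:\,|\mathcal{Q}|\ge2}\Delta_{\mathcal{Q}}(3\beta_j,\beta_{j+1})\Big),$$ where $\mathcal{Q}$ ranges over partitions of $[r]=\{1,\dots,r\}$ with at least two blocks.
   Context: For $\underline h=(h_1,\dots,h_r)\in H^r$ and $I,J\subset[r]$: $d^I(\underline h)=\max\{d(h_i,h_j):i,j\in I\}$, $d_{I,J}(\underline h)=\min\{d(h_i,h_j):i\in I,j\in J\}$. For a partition $\mathcal{Q}$ of $[r]$: $d^{\mathcal{Q}}(\underline h)=\max_{I\in\mathcal{Q}}d^I(\underline h)$, $d_{\mathcal{Q}}(\underline h)=\min\{d_{I,J}(\underline h):I\ne J,\ I,J\in\mathcal{Q}\}$, and $\Delta_{\mathcal{Q}}(\alpha,\beta)=\{\underline h\in H^r:d^{\mathcal{Q}}(\underline h)\le\alpha,\ d_{\mathcal{Q}}(\underline h)>\beta\}$. Also $\Delta(\beta)=\{\underline h\in H^r:\max_{i,j}d(h_i,h_j)\le\beta\}$. *)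

(* Defs.v *)
From mathcomp Require Import all_boot all_order all_algebra.
From mathcomp Require Import reals.
Set Implicit Arguments. Unset Strict Implicit. Unset Printing Implicit Defensive.
Import Order.TTheory GRing.Theory Num.Theory.
Local Open Scope ring_scope.

Definition is_group (H : Type) (mul : H -> H -> H) (inv : H -> H) (e : H) : Prop :=
  [/\ (forall x y z, mul x (mul y z) = mul (mul x y) z),
      (forall x, mul e x = x /\ mul x e = x) &
      (forall x, mul (inv x) x = e /\ mul x (inv x) = e)].

Definition is_metric (R : realType) (H : Type) (d : H -> H -> R) : Prop :=
  [/\ (forall x y, 0 <= d x y),
      (forall x y, d x y = 0 <-> x = y),
      (forall x y, d x y = d y x) &
      (forall x y z, d x z <= d x y + d y z)].

(* Delta(beta) = { h in H^r : max_{i,j} d(h_i,h_j) <= beta }  (r >= 1, so the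
   max over a nonempty finite set is <= beta iff every term is). *)
Definition Delta (R : realType) (H : Type) (d : H -> H -> R) (r : nat)
  (beta : R) (h : 'I_r -> H) : Prop :=
  forall i j : 'I_r, d (h i) (h j) <= beta.

(* Delta_Q(alpha,beta) = { h : d^Q(h) <= alpha, d_Q(h) > beta }, where
   d^Q(h) = max_{I in Q} max_{i,j in I} d(h_i,h_j) and
   d_Q(h) = min_{I <> J in Q} min_{i in I, j in J} d(h_i,h_j);
   the finite max/min (over nonempty index sets) are unfolded. *)
Definition DeltaQ (R : realType) (H : Type) (d : H -> H -> R) (r : nat)
  (Q : {set {set 'I_r}}) (alpha beta : R) (h : 'I_r -> H) : Prop :=
  (forall I, I \in Q -> forall i j, i \in I -> j \in I -> d (h i) (h j) <= alpha) /\
  (forall I J, I \in Q -> J \in Q -> I != J ->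
     forall i j, i \in I -> j \in J -> beta < d (h i) (h j)).

(* Main.v *)
Require Import Defs.
From mathcomp Require Import all_boot all_order all_algebra.
From mathcomp Require Import reals.
From Stdlib Require Import Classical.
From mathcomp Require Import lra zify.
Import Order.TTheory GRing.Theory Num.Theory.
Local Open Scope ring_scope.

Theorem proposition6p2 (R : realType) (H : Type)
  (mul : H -> H -> H) (inv : H -> H) (e : H) (Hgrp : is_group mul inv e)
  (d : H -> H -> R) (Hd : is_metric d)
  (r : nat) (hr : (3 <= r)%N)
  (beta : nat -> R) (hb0 : beta 0%N = 0)
  (hb : forall j : nat, (j < r)%N -> 3 * beta j < beta j.+1) :
  forall h : 'I_r -> H,
    Delta d (beta r) h \/
    exists j : nat, (j < r)%N /\
      exists Q : {set {set 'I_r}},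
        [/\ partition Q [set: 'I_r], (2 <= #|Q|)%N &
            DeltaQ d Q (3 * beta j) (beta j.+1) h].
Proof.
move=> h.
case: Hd => d0 dE dC dT.
have bpos : forall j, (j <= r)%N -> 0 <= beta j.
  elim=> [|j IH] hj; first by rewrite hb0.
  have := hb j hj; have := IH (ltnW hj); lra.
have bmono : forall j k, (j + k.+1 <= r)%N -> 3 * beta j < beta (j + k.+1)%N.
  move=> j; elim=> [|k IH] hk; first by rewrite addnS addn0 in hk *; apply: hb.
  have hk' : (j + k.+1 <= r)%N by apply: leq_trans _ hk; rewrite leq_add2l.
  have := IH hk'; have := hb (j + k.+1)%N (leq_trans (eq_leq (esym (addnS j k.+1))) hk); have := bpos _ hk'.
  rewrite -addnS; lra.
have b3r : forall j, (j < r)%N -> 3 * beta j <= beta r.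
  move=> j hj; have := bmono j (r - j.+1)%N.
  rewrite subnSK // subnKC ?(ltnW hj) //.
  by move=> /(_ (leqnn r)) /ltW.
pose Inv j (f : 'I_r -> 'I_r) :=
  (forall x y, f x = f y -> d (h x) (h y) <= 3 * beta j) /\
  (#|f @: [set: 'I_r]| + j <= r)%N.
set Goal := (_ \/ _).
have allsame : forall j f, (j < r)%N -> Inv j f -> (forall x y, f x = f y) ->
    Delta d (beta r) h.
  move=> j f hj [Hf _] fe x y; apply: le_trans (b3r j hj).
  exact: Hf (fe x y).
have nopair : forall j f, (j < r)%N -> Inv j f ->
    (forall x y, f x != f y -> beta j.+1 < d (h x) (h y)) -> Goal.
  move=> j f hj Ij np.
  have [[x [y nxy]]|] := classic (exists x y, f x != f y); last first.
    move=> nex; rewrite /Goal; left; apply: (allsame j f hj Ij) => x y.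
    by apply/eqP/negPn/negP => nxy; apply: nex; exists x, y.
  rewrite /Goal; right; exists j; split=> //; exists (preim_partition f [set: 'I_r]).
  have Pm : forall z, [set w in [set: 'I_r] | f z == f w]
                        \in preim_partition f [set: 'I_r].
    by move=> z; apply: imset_f; rewrite inE.
  split; first exact: preim_partitionP.
  - have -> : 2%N = #|[set [set w in [set: 'I_r] | f x == f w];
                           [set w in [set: 'I_r] | f y == f w]]|.
      rewrite cards2; case: eqP => // /setP /(_ x); rewrite !inE eqxx.
      by rewrite eq_sym (negbTE nxy).
    apply: subset_leq_card; apply/subsetP => B; rewrite !inE.
    by case/orP => /eqP ->; apply: Pm.
  - split.
    + move=> I /imsetP [z _ ->] i k; rewrite !inE => /eqP hi /eqP hk.
      by case: Ij => Hf _; apply: Hf; rewrite -hi -hk.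
    + move=> I J /imsetP [z _ ->] /imsetP [w _ ->] nIJ i k.
      rewrite !inE => /eqP zi /eqP wk; apply: np.
      apply: contra nIJ => /eqP fik; apply/eqP/setP => t; rewrite !inE.
      by rewrite zi fik wk.
have main : forall j, (j < r)%N -> Goal \/ exists f, Inv j f.
  elim=> [|j IH] hj.
    right; exists id; split.
      by move=> x y ->; rewrite hb0 mulr0 (proj2 (dE _ _)).
    by rewrite addn0 imset_id cardsT card_ord.
  case: (IH (ltnW hj)) => [g|[f [Hf Hc]]]; first by left.
  have [[x [y [nxy dxy]]]|np] := classic
      (exists x y, f x != f y /\ d (h x) (h y) <= beta j.+1); last first.
    left; apply: (nopair j f (ltnW hj) (conj Hf Hc)) => x y nxy.
    rewrite ltNge; apply/negP => dle; apply: np; exists x, y; split=> //.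
  right; exists (fun z => if f z == f y then f x else f z); split.
    have key : forall a b, f a = f x -> f b = f y ->
        d (h a) (h b) <= 3 * beta j.+1.
      move=> a b ha hb'.
      have := Hf _ _ ha; have := Hf _ _ hb'; have := hb j (ltnW hj).
      have := dT (h a) (h x) (h b); have := dT (h x) (h y) (h b).
      rewrite (dC (h y) (h b)); lra.
    have lift : forall a b, f a = f b -> d (h a) (h b) <= 3 * beta j.+1.
      move=> a b /Hf; have := hb j (ltnW hj); have := bpos j (ltnW (ltnW hj)).
      lra.
    move=> a b; case: eqP => ha; case: eqP => hb'.
    - by move=> _; apply: lift; rewrite ha hb'.
    - by move=> e1; rewrite dC; apply: key => //; rewrite e1.
    - by move=> e1; apply: key.
    - exact: lift.
  have sub : (fun z => if f z == f y then f x else f z) @: [set: 'I_r]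
              \subset (f @: [set: 'I_r]) :\ f y.
    apply/subsetP => t /imsetP [z _ ->]; rewrite !inE.
    case: ifP => hzz.
      by rewrite nxy; apply: imset_f.
    by rewrite hzz; apply: imset_f.
  have := subset_leq_card sub.
  rewrite (cardsD1 (f y) (f @: [set: 'I_r])) (imset_f _ (in_setT y)) /= in Hc.
  move=> le; rewrite addnS; apply: leq_trans Hc; rewrite add1n ltnS.
  by rewrite leq_add2r.
have hr1 : (r.-1 < r)%N by rewrite ltn_predL; apply: leq_trans hr.
case: (main _ hr1) => [//|[f [Hf Hc]]].
rewrite /Goal; left; apply: (allsame r.-1 f hr1 (conj Hf Hc)) => x y.
have c1 : (#|f @: [set: 'I_r]| <= 1)%N.
  move: Hc hr; set c := #|_|; case: (r) => // n; rewrite /= => Hc _; lia.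
have m1 : f x \in f @: [set: 'I_r] by apply: imset_f; rewrite inE.
have m2 : f y \in f @: [set: 'I_r] by apply: imset_f; rewrite inE.
have := card_le1_eqP c1 _ _ m1 m2. move=> E; by [rewrite E | rewrite -E].
Qed.
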